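(* Let $\overrightarrow{W}$ be a Morse sequence on a simplicial complex $K$. Then for every $p$: (1) $H_p(\overline O)$ and $H_p(\widehat W)$ are isomorphic vector spaces; (2) $H^p(\underline O)$ and $H^p(\widehat W)$ are isomorphic vector spaces.
   Context: A simplicial complex $K$ is a finite collection of non-empty finite sets closed under taking non-empty subsets; $\dim\sigma=|\sigma|-1$, $K^{(p)}$ the set of $p$-simplices. A pair $(\sigma,\tau)$ with $\sigma\subsetneq\tau$ is a free pair for $K$ if $\tau$ is the only simplex other than $\sigma$ containing $\sigma$; $K$ is then an elementary expansion of $K\setminus\{\sigma,\tau\}$. If $\nu$ is a facet (maximal simplex) of $K$, $K$ is an elementary filling of $K\setminus\{\nu\}$. A Morse sequence on $K$ is a sequence $\langle\emptyset=K_0,\dots,K_k=K\rangle$ with each $K_i$ an elementary expansion or filling of $K_{i-1}$; simplices added by fillings are critical; for an expansion $K_i=K_{i-1}\cup\{\sigma,\tau\}$, $\sigma\subset\tau$, $\sigma$ is lower regular and $\tau$ upper regular. $\widehat W$ is the set of critical simplices. $K[p]$ is the $\mathbb{Z}_2$-vector space of subsets of $K^{(p)}$ (sum = symmetric difference, $0=\emptyset$), $\widehat W[p]=\{c\in K[p]:c\subseteq\widehat W\}$. For $\sigma\in K^{(p)}$, $\partial(\sigma)=\{\tau\in K^{(p-1)}:\tau\subset\sigma\}$, $\delta(\sigma)=\{\tau\in K^{(p+1)}:\sigma\subset\tau\}$, with linear extensions $\partial_p,\delta_p$. The reference map $\curlywedge$ is the unique map assigning to each $p$-simplex an element of $\widehat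 W[p]$, extended linearly, with $\curlywedge(\nu)=\{\nu\}$ for critical $\nu$ and $\curlywedge(\tau)=0=\curlywedge(\partial(\tau))$ for upper regular $\tau$; the coreference map $\curlyvee$ is the unique such map with $\curlyvee(\nu)=\{\nu\}$ for critical $\nu$ and $\curlyvee(\sigma)=0=\curlyvee(\delta(\sigma))$ for lower regular $\sigma$. Critical complex: $(\widehat W[p],\widehat\partial_p)$ with $\widehat\partial_p(c)=\curlywedge(\partial_p(c))$; cocritical complex $(\widehat W[p],\widehat\delta_p)$ with $\widehat\delta_p(c)=\curlyvee(\delta_p(c))$; $H_p(\widehat W)$ and $H^p(\widehat W)$ are their (co)homology spaces. Extension maps: $\widetilde\curlywedge_p,\widetilde\curlyvee_p:\widehat W[p]\to K[p]$ linear with $\widetilde\curlywedge(\kappa)=\{\nu\in K:\kappa\in\curlyvee(\nu)\}$, $\widetilde\curlyvee(\kappa)=\{\nu\in K:\kappa\in\curlywedge(\nu)\}$ for critical $p$-simplices $\kappa$. $\overline O[p]=\operatorname{im}\widetilde\curlywedge_p$ and $\underline O[p]=\operatorname{im}\widetilde\curlyvee_p$. The extension complex is the chain complex $(\overline O[p],\partial_p)$ and the coextension complex the cochain complex $(\underline O[p],\delta_p)$ (here $\partial_p$ maps $\overline O[p]$ into $\overline O[p-1]$ and $\delta_p$ maps $\underline O[p]$ into $\underline O[p+1]$); $H_p(\overline O)$ and $H^p(\underline O)$ denote their homology and cohomology spaces. *)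

(* Defs.v *)
From HB Require Import structures.
From mathcomp Require Import all_boot all_algebra.
Set Implicit Arguments. Unset Strict Implicit. Unset Printing Implicit Defensive.
Import GRing.Theory.
Local Open Scope ring_scope.

Section Morse.
Variable V : finType.

Definition is_complex (K : {set {set V}}) : Prop :=
  set0 \notin K /\
  forall s t : {set V}, s \in K -> t \subset s -> t != set0 -> t \in K.

(* Steps of a Morse sequence: an elementary filling (adding a facet nu)
   or an elementary expansion (adding a free pair (sigma, tau)). *)
Inductive step := Fill of {set V} | Exp of {set V} & {set V}.

Definition added (st : step) : {set {set V}} :=
  match st with Fill nu => [set nu] | Exp s t => [set s; t] end.

Definition Kstage (W : seq step) (i : nat) : {set {set V}} :=
  \bigcup_(st <- take i W) added st.

Definition valid_step (Kprev Knext : {set {set V}}) (st : step) : Prop :=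
  is_complex Knext /\
  match st with
  | Fill nu => nu \notin Kprev /\ Knext = nu |: Kprev /\
      (forall t, t \in Knext -> nu \subset t -> t = nu)
  | Exp s t => s \proper t /\ s \notin Kprev /\ t \notin Kprev /\
      Knext = s |: (t |: Kprev) /\
      (forall r, r \in Knext -> s \subset r -> r = s \/ r = t)
  end.

Definition morse_seq (K : {set {set V}}) (W : seq step) : Prop :=
  (forall i, (i < size W)%N ->
     valid_step (Kstage W i) (Kstage W i.+1) (nth (Fill set0) W i)) /\
  Kstage W (size W) = K.

Definition critical (W : seq step) (nu : {set V}) : bool :=
  has (fun st => if st is Fill n then n == nu else false) W.
Definition lower_regular (W : seq step) (s : {set V}) : bool :=
  has (fun st => if st is Exp s' _ then s' == s else false) W.
Definition upper_regular (W : seq step) (t : {set V}) : bool :=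
  has (fun st => if st is Exp _ t' then t' == t else false) W.

(* Chains over Z_2: a chain is a Z_2-valued function on simplices, identified
   with the set of simplices where it is 1 (sum = symmetric difference). *)
Definition chain := {ffun {set V} -> (GRing.regular ('F_2)%type)}.

Definition elem (s : {set V}) : chain := [ffun x => (x == s)%:R].

Definition bd_set (K : {set {set V}}) (s : {set V}) : {set {set V}} :=
  [set t in K | (t \proper s) && (#|t|.+1 == #|s|)].
Definition cobd_set (K : {set {set V}}) (s : {set V}) : {set {set V}} :=
  [set t in K | (s \proper t) && (#|s|.+1 == #|t|)].

Definition bd_fun (K : {set {set V}}) (c : chain) : chain :=
  [ffun t => \sum_(s in K | t \in bd_set K s) c s].
Definition cobd_fun (K : {set {set V}}) (c : chain) : chain :=
  [ffun t => \sum_(s in K | t \in cobd_set K s) c s].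

Definition linext (K : {set {set V}}) (f : {set V} -> chain) (c : chain)
  : chain := \sum_(s in K) c s *: f s.

(* critical chains of cardinality n (i.e. dimension n-1): W^[n-1] *)
Definition crit_space (K : {set {set V}}) (W : seq step) (n : nat)
  : {vspace chain} :=
  <<[seq elem s | s <- enum [set s in K | critical W s && (#|s| == n)]]>>%VS.

Definition crit_of_dim (K : {set {set V}}) (W : seq step) (n : nat)
  (c : chain) : Prop :=
  forall x, c x != 0 -> [/\ x \in K, critical W x & #|x| == n].

Definition is_reference (K : {set {set V}}) (W : seq step)
  (ref : {set V} -> chain) : Prop :=
  [/\ forall s, s \in K -> crit_of_dim K W #|s| (ref s),
      forall nu, nu \in K -> critical W nu -> ref nu = elem nu &
      forall t, t \in K -> upper_regular W t ->
        ref t = 0 /\ linext K ref (bd_fun K (elem t)) = 0].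

Definition is_coreference (K : {set {set V}}) (W : seq step)
  (cor : {set V} -> chain) : Prop :=
  [/\ forall s, s \in K -> crit_of_dim K W #|s| (cor s),
      forall nu, nu \in K -> critical W nu -> cor nu = elem nu &
      forall s, s \in K -> lower_regular W s ->
        cor s = 0 /\ linext K cor (cobd_fun K (elem s)) = 0].

Definition ext_ref (K : {set {set V}}) (cor : {set V} -> chain)
  (kappa : {set V}) : chain := [ffun nu => if nu \in K then cor nu kappa else 0].
Definition ext_coref (K : {set {set V}}) (ref : {set V} -> chain)
  (kappa : {set V}) : chain := [ffun nu => if nu \in K then ref nu kappa else 0].

(* \overline O[n-1] and \underline O[n-1] (indexed by cardinality n) *)
Definition Obar (K : {set {set V}}) (W : seq step) (cor : {set V} -> chain)
  (n : nat) : {vspace chain} :=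
  <<[seq ext_ref K cor s | s <- enum [set s in K | critical W s && (#|s| == n)]]>>%VS.
Definition Ounder (K : {set {set V}}) (W : seq step) (ref : {set V} -> chain)
  (n : nat) : {vspace chain} :=
  <<[seq ext_coref K ref s | s <- enum [set s in K | critical W s && (#|s| == n)]]>>%VS.

End Morse.

(* Isomorphism of quotient spaces U1/W1 ~ U2/W2 (with W1 <= U1, W2 <= U2):
   a linear map f sending U1 into U2 and W1 into W2 whose induced map
   U1/W1 -> U2/W2 is injective and surjective. *)
Definition quot_iso (F : fieldType) (vT : vectType F)
  (U1 W1 U2 W2 : {vspace vT}) : Prop :=
  exists f : 'Hom(vT, vT),
    [/\ (f @: U1 <= U2)%VS, (f @: W1 <= W2)%VS,
        (U1 :&: f @^-1: W2 <= W1)%VS & (U2 <= f @: U1 + W2)%VS].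

Section Homology.
Variable V : finType.
Variables (K : {set {set V}}) (W : seq (step V)).
Variables (ref cor : {set V} -> chain V).

Definition bdH : 'Hom(chain V, chain V) := linfun (bd_fun K).
Definition cobdH : 'Hom(chain V, chain V) := linfun (cobd_fun K).
Definition critbdH : 'Hom(chain V, chain V) :=
  linfun (fun c => linext K ref (bd_fun K c)).
Definition critcobdH : 'Hom(chain V, chain V) :=
  linfun (fun c => linext K cor (cobd_fun K c)).

Definition Zcrit (p : nat) := (crit_space K W p.+1 :&: lker critbdH)%VS.
Definition Bcrit (p : nat) := (critbdH @: crit_space K W p.+2)%VS.
Definition Zext (p : nat) := (Obar K W cor p.+1 :&: lker bdH)%VS.
Definition Bext (p : nat) := (bdH @: Obar K W cor p.+2)%VS.
(* cocycles / coboundaries in dimension p; the space in cardinality 0 is 0 *)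
Definition Zcocrit (p : nat) := (crit_space K W p.+1 :&: lker critcobdH)%VS.
Definition Bcocrit (p : nat) := (critcobdH @: crit_space K W p)%VS.
Definition Zcoext (p : nat) := (Ounder K W ref p.+1 :&: lker cobdH)%VS.
Definition Bcoext (p : nat) := (cobdH @: Ounder K W ref p)%VS.
End Homology.

(* Main.v *)
Require Import Defs.
From HB Require Import structures.
From mathcomp Require Import all_boot all_algebra.
Set Implicit Arguments. Unset Strict Implicit. Unset Printing Implicit Defensive.
Import GRing.Theory.
Local Open Scope ring_scope.

Section Basics.
Variable V : finType.
Implicit Types (K : {set {set V}}) (c d y : chain V).

Lemma lfunE' (f : chain V -> chain V) (Hf : linear f) x : linfun f x = f x.
Proof. pose fL : {linear _ -> _} := HB.pack f (GRing.isLinear.Build _ _ _ _ f Hf). exact: (lfunE fL x). Qed.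

Definition Dg K (r : {set V} -> {set V} -> bool) (c : chain V) : chain V :=
  [ffun t => \sum_(s in K | r t s) c s].

Lemma Dg_lin K r : linear (Dg K r).
Proof.
move=> k u v; apply/ffunP => t; rewrite !ffunE.
rewrite scaler_sumr -big_split /=; apply: eq_bigr => s _; by rewrite !ffunE.
Qed.

Lemma linext_lin K f : linear (linext K f).
Proof.
move=> k u v; rewrite /linext scaler_sumr -big_split /=; apply: eq_bigr => s _.
by rewrite !ffunE scalerDl scalerA.
Qed.

HB.instance Definition _ K r := GRing.isLinear.Build _ _ _ _ (Dg K r) (Dg_lin K r).
HB.instance Definition _ K f := GRing.isLinear.Build _ _ _ _ (linext K f) (linext_lin K f).

Lemma elemE (s x : {set V}) : elem s x = (x == s)%:R.
Proof. by rewrite ffunE. Qed.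

Lemma F2_1 : (1 + 1 : 'F_2) = 0. Proof. by apply: val_inj. Qed.
Lemma F2_neq0 (x : 'F_2) : x != 0 -> x = 1.
Proof. case: x => [[|[|]]] //= ? ?. by apply: val_inj. Qed.
Lemma F2_nat n : (n%:R : 'F_2) = (odd n)%:R.
Proof.
elim: n => [|n IH] //. rewrite mulrSr IH /=.
case: (odd n) => /=; first by rewrite F2_1. by rewrite add0r.
Qed.

Lemma linext_elem K f s : s \in K -> linext K f (elem s) = f s.
Proof.
move=> sK; rewrite /linext (bigD1 s) //= big1 ?addr0.
  by rewrite elemE eqxx scale1r.
by move=> t /andP[_ ts]; rewrite elemE (negbTE ts) scale0r.
Qed.

Lemma Dg_elem K r s t : s \in K -> Dg K r (elem s) t = (r t s)%:R.
Proof.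
move=> sK; rewrite ffunE. rewrite (eq_bigr (fun u => (u == s)%:R)); last by move=> u _; rewrite elemE.
case rts: (r t s).
  rewrite (bigD1 s) /= ?sK ?rts // eqxx big1 ?addr0 // => u /andP[/andP[_ _] /negbTE ->] //.
rewrite big1 // => u /andP[_ rtu]; case: eqP => // e; by rewrite e rts in rtu.
Qed.

Lemma linext_Dg_elem K r f s : s \in K ->
  linext K f (Dg K r (elem s)) = \sum_(t in K | r t s) f t.
Proof.
move=> sK; rewrite /linext big_mkcondr /=; apply: eq_bigr => t _.
by rewrite Dg_elem //; case: (r t s); rewrite ?scale1r ?scale0r.
Qed.

Lemma decomp K c : (forall x, c x != 0 -> x \in K) -> c = \sum_(s in K) c s *: elem s.
Proof.
move=> Hc; apply/ffunP => x; rewrite sum_ffunE.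
rewrite (eq_bigr (fun s => c s * (x == s)%:R)); last by move=> s _; rewrite !ffunE.
case xK: (x \in K).
  rewrite (bigD1 x) //= eqxx mulr1 big1 ?addr0 // => s /andP[_ /negbTE].
  by rewrite eq_sym => ->; rewrite mulr0.
rewrite big1; last by move=> s sK; case: eqP => [e|]; [rewrite e sK in xK|rewrite mulr0].
by apply/eqP; apply: contraFT xK => /Hc.
Qed.

End Basics.
Section Generic.
Variable V : finType.
Variable K : {set {set V}}.
Variables (crit P Q : pred {set V}).
Variable r : {set V} -> {set V} -> bool.
Variables (a b : {set V} -> chain V).

Definition critof n (c : chain V) :=
  forall x, c x != 0 -> [/\ x \in K, crit x & #|x| == n].
Definition extg (k : {set V}) : chain V :=
  [ffun nu => if nu \in K then b nu k else 0].

Hypothesis Hr : forall t s, r t s -> t \in K.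
Hypothesis Hclass : forall s, s \in K -> [|| crit s, P s | Q s].
Hypothesis Ha1 : forall s, s \in K -> critof #|s| (a s).
Hypothesis Ha2 : forall s, s \in K -> crit s -> a s = elem s.
Hypothesis Ha3 : forall s, s \in K -> P s -> a s = 0.
Hypothesis Ha4 : forall s, s \in K -> P s -> \sum_(t in K | r t s) a t = 0.
Hypothesis Hb2 : forall s, s \in K -> crit s -> b s = elem s.
Hypothesis Hb3 : forall s, s \in K -> Q s -> b s = 0.
Hypothesis Hb4 : forall s, s \in K -> Q s -> \sum_(t in K | r s t) b t = 0.
Hypothesis HDD : forall c, Dg K r (Dg K r c) = 0.
Hypothesis HU : forall y : chain V,
  (forall x, y x != 0 -> [/\ x \in K, ~~ crit x & ~~ Q x]) ->
  (forall x, Q x -> Dg K r y x = 0) -> y = 0.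

Local Notation D := (Dg K r).
Local Notation A := (linext K a).
Local Notation E := (linext K extg).

Definition Opr (y : chain V) :=
  [/\ forall x, y x != 0 -> x \in K, forall x, y x != 0 -> ~~ Q x &
      forall x, Q x -> D y x = 0].

Lemma elem_neq0 (s : {set V}) : elem s != 0.
Proof. apply/eqP => /ffunP /(_ s); rewrite elemE eqxx !ffunE => /eqP; by rewrite oner_eq0. Qed.

Lemma critQ s : s \in K -> crit s -> Q s -> False.
Proof. move=> sK cs qs; have := Hb3 sK qs; rewrite Hb2 // => e; by have := elem_neq0 s; rewrite e eqxx. Qed.
Lemma critP s : s \in K -> crit s -> P s -> False.
Proof. move=> sK cs qs; have := Ha3 sK qs; rewrite Ha2 // => e; by have := elem_neq0 s; rewrite e eqxx. Qed.

Lemma linextE f c x : linext K f c x = \sum_(s in K) c s * f s x.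
Proof. rewrite /linext sum_ffunE; apply: eq_bigr => s _; by rewrite ffunE. Qed.

Lemma P1 y x : Opr y -> x \in K -> crit x -> A y x = y x.
Proof.
case=> S1 S2 S3 xK cx; rewrite linextE (bigD1 x) //= Ha2 // elemE eqxx mulr1 big1 ?addr0 //.
move=> s /andP[sK sx]; have [->|ys] := eqVneq (y s) 0; first by rewrite mul0r.
have := Hclass sK; case/or3P => [cs|ps|qs].
- have xs : (x == s) = false by rewrite eq_sym (negbTE sx).
  by rewrite Ha2 // elemE xs mulr0.
- by rewrite Ha3 // ffunE mulr0.
- by have := S2 _ ys; rewrite qs.
Qed.

Lemma P2 d x : x \in K -> crit x -> E d x = d x.
Proof.
move=> xK cx; rewrite linextE (bigD1 x) //= ffunE xK Hb2 // elemE eqxx mulr1 big1 ?addr0 //.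
move=> s /andP[sK sx]; by rewrite ffunE xK Hb2 // elemE (negbTE sx) mulr0.
Qed.

Lemma D_supp c x : D c x != 0 -> x \in K.
Proof.
rewrite ffunE => H; apply: contraTT H => xK; rewrite big1 // => s /andP[_ /Hr]; by rewrite (negbTE xK).
Qed.

Lemma D_extg k x : Q x -> D (extg k) x = 0.
Proof.
move=> qx; case xK: (x \in K); last by apply/eqP; apply: contraFT xK => /D_supp.
rewrite ffunE (eq_bigr (fun t => b t k)); last by move=> t /andP[tK _]; rewrite ffunE tK.
by rewrite -sum_ffunE Hb4 // ffunE.
Qed.

Lemma P3 d : Opr (E d).
Proof.
split.
- move=> x; rewrite linextE => H; apply: contraTT H => xK.
  by rewrite big1 // => s _; rewrite ffunE (negbTE xK) mulr0.
- move=> x; rewrite linextE => H; apply: contraTN H => qx.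
  case xK: (x \in K); first by rewrite big1 // => s _; rewrite ffunE xK Hb3 // ffunE mulr0.
  by rewrite big1 // => s _; rewrite ffunE xK mulr0.
- move=> x qx; rewrite /linext linear_sum sum_ffunE big1 // => s _; rewrite linearZ ffunE D_extg //. by rewrite scaler0.
Qed.

Lemma P4 y : Opr y -> Opr (D y).
Proof.
case=> _ _ S3; split.
- exact: D_supp.
- by move=> x H; apply: contra H => /S3 ->.
- by move=> x _; rewrite HDD ffunE.
Qed.

Lemma Opr_sub y z : Opr y -> Opr z -> Opr (y - z).
Proof.
case=> Y1 Y2 Y3 [Z1 Z2 Z3]; split.
- move=> x; rewrite !ffunE => H; case: (eqVneq (y x) 0) => [e|]; last exact: Y1.
  by apply: Z1; move: H; rewrite e sub0r oppr_eq0.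
- move=> x; rewrite !ffunE => H; case: (eqVneq (y x) 0) => [e|]; last exact: Y2.
  by apply: Z2; move: H; rewrite e sub0r oppr_eq0.
- move=> x qx; move: (Y3 x qx) (Z3 x qx); rewrite linearB !ffunE /= => -> ->; by rewrite subr0.
Qed.

Lemma key y : Opr y -> y = E (A y).
Proof.
move=> Oy; apply/eqP; rewrite -subr_eq0; apply/eqP.
have Oz := Opr_sub Oy (P3 (A y)); case: (Oz) => Z1 Z2 Z3.
apply: HU => // x H; split; [exact: Z1 H | | exact: Z2].
have xK := Z1 _ H; apply: contra H => cx.
by rewrite !ffunE P2 // P1 // subrr.
Qed.

Lemma N1 n c : critof n c -> A (E c) = c.
Proof.
move=> Hc; apply/ffunP => x.
case: (boolP ((x \in K) && crit x)) => [/andP[xK cx]|H].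
  by rewrite P1 ?P2 //; exact: P3.
have -> : c x = 0 by apply/eqP; apply: contraR H => /Hc [-> -> _].
rewrite linextE big1 // => s sK.
have [->|] := eqVneq (a s x) 0; first by rewrite mulr0.
by case/(Ha1 sK) => xK cx _; rewrite xK cx in H.
Qed.

Lemma N2 d : D (E d) = E (A (D (E d))).
Proof. apply: key; apply: P4; exact: P3. Qed.

Lemma N3 n c : critof n c -> A (D (E c)) = A (D c).
Proof.
move=> Hc; apply/eqP; rewrite -subr_eq0 -!linearB; apply/eqP.
set y := E c - c.
have ys : forall x, y x != 0 -> x \in K /\ P x.
  move=> x; rewrite !ffunE => H.
  case: (boolP (x \in K)) => xK; last first.
    move: H; rewrite (_ : c x = 0); last by apply/eqP; apply: contraR xK => /Hc [].
    rewrite subr0; case: (P3 c) => S1 _ _ H; by have := S1 x H; rewrite (negbTE xK).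
  case: (boolP (crit x)) => cx; first by move: H; rewrite P2 // subrr eqxx.
  move: H; rewrite (_ : c x = 0); last by apply/eqP; apply: contraR cx => /Hc [].
  rewrite subr0 => H; case: (P3 c) => _ S2 _; have := S2 x H.
  by have := Hclass xK; rewrite (negbTE cx) /= => /orP[->|->].
rewrite (decomp (fun x H => (ys x H).1)) !linear_sum big1 // => s sK.
have [->|ns] := eqVneq (y s) 0; first by rewrite scale0r !linear0.
rewrite !linearZ /= linext_Dg_elem // Ha4 ?scaler0 //; exact: (ys s ns).2.
Qed.

Definition Sg n := [set s in K | crit s && (#|s| == n)].
Definition CSg n : {vspace chain V} := <<[seq elem s | s <- enum (Sg n)]>>%VS.
Definition Og n : {vspace chain V} := <<[seq extg s | s <- enum (Sg n)]>>%VS.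

Lemma critofE n c : critof n c <-> (forall x, x \notin Sg n -> c x = 0).
Proof.
split.
  move=> Hc x; rewrite inE => H; apply/eqP; apply: contraR H => /Hc [-> -> ->] //.
move=> H x nx; have : x \in Sg n by apply: contraR nx => /H ->; rewrite eqxx.
by rewrite inE => /and3P[-> -> ->].
Qed.

Lemma CS_P n c : c \in CSg n <-> critof n c.
Proof.
split.
  move=> Hc; apply/critofE => x nx.
  rewrite (coord_span Hc) sum_ffunE big1 // => i _.
  rewrite ffunE; set X := [seq elem s | s <- enum (Sg n)].
  have : X`_i \in X by rewrite mem_nth // size_tuple.
  case/mapP => s; rewrite mem_enum => sS ->; rewrite elemE.
  case: eqP => [e|]; last by rewrite scaler0.
  by rewrite e sS in nx.
move=> Hc; have Hk : forall x, c x != 0 -> x \in K by move=> x /Hc [].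
rewrite (decomp Hk); apply: memv_suml => s sK.
have [->|ns] := eqVneq (c s) 0; first by rewrite scale0r mem0v.
apply: memvZ; apply: memv_span; apply: map_f.
by rewrite mem_enum inE; case: (Hc s ns) => -> -> ->.
Qed.

Lemma AE c : linfun A c = A c.
Proof. exact: lfunE' (linext_lin K a) c. Qed.
Lemma EE c : linfun E c = E c.
Proof. exact: lfunE' (linext_lin K extg) c. Qed.
Lemma DE c : linfun D c = D c.
Proof. exact: lfunE' (Dg_lin K r) c. Qed.
Lemma DhE c : linfun (fun c => A (D c)) c = A (D c).
Proof. apply: lfunE' => k u v; by rewrite !linearP. Qed.

Lemma Og_img n : Og n = (linfun E @: CSg n)%VS.
Proof.
rewrite limg_span /Og -map_comp; congr (<< _ >>%VS); apply/esym/eq_in_map => s.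
by rewrite mem_enum inE => /andP[sK _] /=; rewrite EE linext_elem.
Qed.

Lemma Og_P n x : x \in Og n <-> exists2 c, critof n c & x = E c.
Proof.
rewrite Og_img; split.
  by case/memv_imgP => c /CS_P Hc ->; exists c; rewrite ?EE.
by case=> c /CS_P Hc ->; rewrite -EE; apply: memv_img.
Qed.

Theorem gen n m :
  quot_iso (Og n :&: lker (linfun D)) (linfun D @: Og m)
           (CSg n :&: lker (linfun (fun c => A (D c))))
           (linfun (fun c => A (D c)) @: CSg m).
Proof.
exists (linfun A); split.
- apply/subvP => _ /memv_imgP [x /memv_capP [/Og_P [c Hc ->] xk] ->].
  move: xk; rewrite memv_ker DE => /eqP xk.
  rewrite AE (N1 Hc) memv_cap; apply/andP; split; first exact/CS_P.
  by rewrite memv_ker DhE -(N3 Hc) xk linear0.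
- apply/subvP => _ /memv_imgP [_ /memv_imgP [y /Og_P [d Hd ->] ->] ->].
  rewrite AE DE (N3 Hd) -DhE; apply: memv_img; exact/CS_P.
- apply/subvP => x /memv_capP [/memv_capP [/Og_P [c Hc ->] _]].
  rewrite -memv_preim => /memv_imgP [d /CS_P Hd]; rewrite AE DhE (N1 Hc) => ->.
  rewrite -(N3 Hd) -N2 -DE; apply: memv_img; apply/Og_P; by exists d.
- apply/subvP => c /memv_capP [/CS_P Hc]; rewrite memv_ker DhE => /eqP ck.
  apply: (subvP (addvSl _ _)); rewrite -(N1 Hc) -AE; apply: memv_img.
  rewrite memv_cap; apply/andP; split; first by apply/Og_P; exists c.
  by rewrite memv_ker DE N2 (N3 Hc) ck !linear0.
Qed.
End Generic.

Section Concrete.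
Variable V : finType.
Implicit Types (K L : {set {set V}}).

Lemma even_between K (L H : {set V}) : is_complex K -> H \in K ->
  ~~ odd #|[set t in K | [&& L \proper t, #|L|.+1 == #|t|, t \proper H & #|t|.+1 == #|H|]]|.
Proof.
move=> [K0 Kc] HK; set S := [set t in K | _].
case: (set_0Vmem S) => [->|[t0]]; first by rewrite cards0.
rewrite inE => /andP[_ /and4P[Lt0 /eqP c1 t0H /eqP c2]].
have LH : L \subset H by apply: subset_trans (proper_sub Lt0) (proper_sub t0H).
have -> : S = (fun z => z |: L) @: (H :\: L).
  apply/setP => t; rewrite inE; apply/andP/imsetP.
    case=> tK /and4P[Lt /eqP cLt tH _].
    have : #|t :\: L| == 1%N.
      by rewrite cardsD (setIidPr (proper_sub Lt)) -cLt subSnn.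
    case/cards1P => z ez; exists z.
      have : z \in t :\: L by rewrite ez set11.
      by rewrite !inE => /andP[-> /(subsetP (proper_sub tH)) ->].
    by rewrite -{1}(setID t L) (setIidPr (proper_sub Lt)) ez setUC.
  case=> z; rewrite inE => /andP[zL zH] ->.
  have sub : z |: L \subset H by rewrite subUset sub1set zH LH.
  have cz : #|z |: L| = #|L|.+1 by rewrite cardsU1 zL.
  split.
    apply: Kc HK sub _; apply/set0Pn; exists z; exact: setU11.
  rewrite cz eqxx properEcard subsetUr cz ltnSn /= properEcard sub /=.
  by rewrite cz -c2 -c1 ltnSn eqxx.
rewrite card_in_imset.
  by rewrite cardsD (setIidPr LH) -c2 -c1 -addn2 addKn.
move=> z1 z2; rewrite !inE => /andP[z1L _] /andP[z2L _] e.
have : z1 \in z2 |: L by rewrite -e setU11.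
by case/setU1P => // z1L'; rewrite z1L' in z1L.
Qed.


Lemma DD_gen K r : (forall u s, s \in K -> ~~ odd #|[set t in K | r u t && r t s]|) ->
  forall c : chain V, Dg K r (Dg K r c) = 0.
Proof.
move=> Hev c; apply/ffunP => u; rewrite !ffunE.
rewrite (eq_bigr (fun t => \sum_(s in K | r t s) c s)); last by move=> t _; rewrite ffunE.
rewrite (exchange_big_dep (fun s => s \in K)) /=; last by move=> t s _ /andP[].
rewrite big1 // => s sK.
rewrite (eq_bigl (fun t => t \in [set t in K | r u t && r t s])); last first.
  by move=> t; rewrite !inE sK /=; case: (t \in K); case: (r u t).
by rewrite sumr_const -mulr_natr F2_nat (negbTE (Hev u s sK)) mulr0.
Qed.

Lemma DD_bd K : is_complex K -> forall c : chain V,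
  Dg K (fun t s => t \in bd_set K s) (Dg K (fun t s => t \in bd_set K s) c) = 0.
Proof.
move=> HK; apply: DD_gen => u s sK.
case uK: (u \in K); last first.
  rewrite (_ : [set t in K | _] = set0) ?cards0 //; apply/setP => t.
  by rewrite !inE uK /= andbF.
have := even_between u HK sK; congr (~~ odd _); apply: eq_card => t.
rewrite !inE uK /=; case: (t \in K) => //=.
by case: (u \proper t); case: (_ == _); case: (t \proper s).
Qed.

Lemma DD_cobd K : is_complex K -> forall c : chain V,
  Dg K (fun t s => t \in cobd_set K s) (Dg K (fun t s => t \in cobd_set K s) c) = 0.
Proof.
move=> HK; apply: DD_gen => u s sK.
case uK: (u \in K); last first.
  rewrite (_ : [set t in K | _] = set0) ?cards0 //; apply/setP => t.
  by rewrite !inE uK /= andbF.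
have := even_between s HK uK; congr (~~ odd _); apply: eq_card => t.
rewrite !inE uK /=; case: (t \in K) => //=.
by case: (s \proper t); case: (_ == _); case: (t \proper u); case: (_ == _).
Qed.

End Concrete.

Section MorseFacts.
Variable V : finType.
Variables (K : {set {set V}}) (W : seq (step V)).
Hypothesis HK : is_complex K.
Hypothesis Hms : morse_seq K W.
Local Open Scope nat_scope.

Local Notation Wn i := (nth (Fill set0) W i).
Local Notation Ks i := (Kstage W i).

Lemma Ks_mono i j : i <= j -> Ks i \subset Ks j.
Proof.
move=> ij; rewrite /Kstage -(take_takel W ij) -{2}(cat_take_drop i (take j W)) big_cat /=.
exact: subsetUl.
Qed.

Lemma Ks_K i : Ks i \subset K.
Proof.
case: Hms => _ <-; rewrite /Kstage take_size -{2}(cat_take_drop i W) big_cat /=.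
exact: subsetUl.
Qed.

Lemma K_step s : s \in K -> exists2 i, i < size W & s \in added (Wn i).
Proof.
case: Hms => _ <-; rewrite /Kstage take_size (big_nth (Fill set0)) big_mkord.
by case/bigcupP => i _ H; exists i.
Qed.

Lemma step_reg i s t : i < size W -> Wn i = Exp s t ->
  lower_regular W s /\ upper_regular W t.
Proof.
move=> iW e; split; apply/(has_nthP (Fill set0)); exists i => //; by rewrite e /=.
Qed.

Lemma classify s : s \in K -> [|| critical W s, lower_regular W s | upper_regular W s].
Proof.
case/K_step => i iW; case e: (Wn i) => [nu|s' t'] /=.
  rewrite inE => /eqP ->; apply/orP; left; apply/(has_nthP (Fill set0)); exists i => //.
  by rewrite e /=.
rewrite !inE => /orP[] /eqP ->; have [h1 h2] := step_reg iW e; by rewrite ?h1 ?h2 /= ?orbT.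
Qed.

Lemma UR_at t : upper_regular W t -> exists2 i, i < size W & exists s, Wn i = Exp s t.
Proof.
case/(has_nthP (Fill set0)) => i iW; case e: (Wn i) => [|s t'] // /eqP <-.
by exists i => //; exists s.
Qed.

Lemma LR_at s : lower_regular W s -> exists2 i, i < size W & exists t, Wn i = Exp s t.
Proof.
case/(has_nthP (Fill set0)) => i iW; case e: (Wn i) => [|s' t] // /eqP <-.
by exists i => //; exists t.
Qed.

Lemma valid_exp i s t : i < size W -> Wn i = Exp s t ->
  [/\ is_complex (Ks i.+1), s \proper t, s \notin Ks i,
      Ks i.+1 = s |: (t |: Ks i) &
      forall r, r \in Ks i.+1 -> s \subset r -> r = s \/ r = t].
Proof.
move=> iW e; case: Hms => H _; have := H i iW; rewrite e.
by case=> Hc [st [sn [_ [E Hf]]]].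
Qed.

Lemma free_card L (s t : {set V}) : is_complex L -> s \proper t -> t \in L ->
  (forall r, r \in L -> s \subset r -> r = s \/ r = t) -> #|s|.+1 = #|t|.
Proof.
move=> [_ Lc] st tL Hf; case/properP: (st) => sub [v vt vs].
have rsub : v |: s \subset t by rewrite subUset sub1set vt sub.
have rL : v |: s \in L by apply: Lc tL rsub _; apply/set0Pn; exists v; exact: setU11.
case: (Hf _ rL (subsetUr _ _)) => e.
  by move: (setU11 v s); rewrite e (negbTE vs).
by rewrite -e cardsU1 vs.
Qed.


Lemma HU1 (y : chain V) :
  (forall x, y x != 0%R -> [/\ x \in K, ~~ critical W x & ~~ lower_regular W x]) ->
  (forall x, lower_regular W x -> Dg K (fun t s => t \in bd_set K s) y x = 0%R) -> y = 0%R.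
Proof.
move=> Hy Hd; apply/ffunP => x0; rewrite ffunE; apply/eqP; apply/negPn/negP => nx0.
have URy : forall x, y x != 0%R -> exists2 i, i < size W & exists s, Wn i = Exp s x.
  move=> x /Hy [xK nc nl]; apply: UR_at; move: (classify xK).
  by rewrite (negbTE nc) (negbTE nl).
pose Pj i := (i < size W) && (if Wn i is Exp _ t then y t != 0%R else false).
have exP : exists i, Pj i.
  case: (URy _ nx0) => i iW [s e]; exists i; by rewrite /Pj iW e.
have ubP : forall i, Pj i -> i <= size W by move=> i /andP[/ltnW].
case: (ex_maxnP exP ubP) => j /andP[jW]; case ej: (Wn j) => [nu|sg tu] // ytu maxj.
have [Hc st _ Kj1 Hf] := valid_exp jW ej.
have [lrs _] := step_reg jW ej.
have tuK : tu \in Ks j.+1 by rewrite Kj1 !inE eqxx orbT.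
have sgK : sg \in Ks j.+1 by rewrite Kj1 !inE eqxx.
have := Hd _ lrs; rewrite ffunE (bigD1 tu) /=; last first.
  rewrite (subsetP (Ks_K _) _ tuK) inE (subsetP (Ks_K _) _ sgK) st (free_card Hc st tuK Hf) /=; by apply/eqP.
move=> H; suff : (\sum_(s | (s \in K) && (sg \in bd_set K s) && (s != tu)) y s = 0)%R.
  by move=> e; move: H; rewrite e addr0 => /eqP; rewrite (negbTE ytu).
apply: big1 => s /andP[/andP[sK]]; rewrite inE => /andP[_ /andP[sgs _]] stu.
apply/eqP; apply/negPn/negP => ys.
case: (URy _ ys) => k kW [s' ek].
have kj : k <= j by apply: maxj; rewrite /Pj kW ek.
have [_ _ _ Kk1 _] := valid_exp kW ek.
have sKj : s \in Ks j.+1.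
  apply: (subsetP (Ks_mono (_ : k.+1 <= j.+1))) => //; by rewrite Kk1 !inE eqxx orbT.
case: (Hf _ sKj (proper_sub sgs)) => e.
  by move: sgs; rewrite e properE subxx andbF.
by rewrite e eqxx in stu.
Qed.


Lemma HU2 (y : chain V) :
  (forall x, y x != 0%R -> [/\ x \in K, ~~ critical W x & ~~ upper_regular W x]) ->
  (forall x, upper_regular W x -> Dg K (fun t s => t \in cobd_set K s) y x = 0%R) -> y = 0%R.
Proof.
move=> Hy Hd; apply/ffunP => x0; rewrite ffunE; apply/eqP; apply/negPn/negP => nx0.
have LRy : forall x, y x != 0%R -> exists2 i, i < size W & exists t, Wn i = Exp x t.
  move=> x /Hy [xK nc nu]; apply: LR_at; move: (classify xK).
  by rewrite (negbTE nc) (negbTE nu) orbF.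
pose Pj i := (i < size W) && (if Wn i is Exp s _ then y s != 0%R else false).
have exP : exists i, Pj i.
  case: (LRy _ nx0) => i iW [t e]; exists i; by rewrite /Pj iW e.
case: (ex_minnP exP) => j /andP[jW]; case ej: (Wn j) => [nu|sg tu] // ysg minj.
have [Hc st _ Kj1 Hf] := valid_exp jW ej.
have [_ urt] := step_reg jW ej.
have tuK : tu \in Ks j.+1 by rewrite Kj1 !inE eqxx orbT.
have sgK : sg \in Ks j.+1 by rewrite Kj1 !inE eqxx.
have := Hd _ urt; rewrite ffunE (bigD1 sg) /=; last first.
  rewrite (subsetP (Ks_K _) _ sgK) inE (subsetP (Ks_K _) _ tuK) st (free_card Hc st tuK Hf) /=.
  by apply/eqP.
move=> H; suff : (\sum_(s | (s \in K) && (tu \in cobd_set K s) && (s != sg)) y s = 0)%R.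
  by move=> e; move: H; rewrite e addr0 => /eqP; rewrite (negbTE ysg).
apply: big1 => s /andP[/andP[sK]]; rewrite inE => /andP[_ /andP[stu _]] ssg.
apply/eqP; apply/negPn/negP => ys.
case: (LRy _ ys) => k kW [t' ek].
have jk : j <= k by apply: minj; rewrite /Pj kW ek.
have [_ _ snk _ _] := valid_exp kW ek.
have sKj : s \in Ks j.+1.
  case: Hc => _ Hc; apply: Hc tuK (proper_sub stu) _.
  by apply: contraTneq sK => ->; case: HK.
move: jk; rewrite leq_eqVlt => /orP[/eqP ejk|ltjk].
  by move: ek; rewrite -ejk ej => [[e _]]; rewrite e eqxx in ssg.
by move: snk; rewrite (subsetP (Ks_mono ltjk) _ sKj).
Qed.

End MorseFacts.

Theorem theorem11 (V : finType) (K : {set {set V}}) (W : seq (step V))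
  (ref cor : {set V} -> chain V) :
  is_complex K -> morse_seq K W ->
  is_reference K W ref -> is_coreference K W cor ->
  forall p : nat,
    quot_iso (Zext K W cor p) (Bext K W cor p) (Zcrit K W ref p) (Bcrit K W ref p) /\
    quot_iso (Zcoext K W ref p) (Bcoext K W ref p)
             (Zcocrit K W cor p) (Bcocrit K W cor p).
Proof.
move=> HK Hms [R1 R2 R3] [C1 C2 C3] p.
have cls := classify Hms.
split.
- have Hr : forall t s, t \in bd_set K s -> t \in K by move=> t s; rewrite inE => /andP[].
  have Hcl : forall s, s \in K -> [|| critical W s, upper_regular W s | lower_regular W s].
    move=> s /cls; by case: (critical W s); case: (upper_regular W s); case: (lower_regular W s).
  have Ha4 : forall s, s \in K -> upper_regular W s ->
      \sum_(t in K | t \in bd_set K s) ref t = 0.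
    move=> s sK us; have := (R3 s sK us).2.
    by rewrite (linext_Dg_elem (fun t s => t \in bd_set K s)).
  have Hb4 : forall s, s \in K -> lower_regular W s ->
      \sum_(t in K | s \in bd_set K t) cor t = 0.
    move=> s sK ls; have := (C3 s sK ls).2.
    rewrite (linext_Dg_elem (fun t s => t \in cobd_set K s)) // => e; apply: etrans e.
    apply: eq_bigl => t; rewrite !inE sK; by case: (t \in K).
  exact: (gen Hr Hcl R1 R2 (fun s sK us => (R3 s sK us).1) Ha4 C2
            (fun s sK ls => (C3 s sK ls).1) Hb4 (DD_bd HK) (@HU1 _ _ _ Hms) p.+1 p.+2).
- have Hr : forall t s, t \in cobd_set K s -> t \in K by move=> t s; rewrite inE => /andP[].
  have Ha4 : forall s, s \in K -> lower_regular W s ->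
      \sum_(t in K | t \in cobd_set K s) cor t = 0.
    move=> s sK us; have := (C3 s sK us).2.
    by rewrite (linext_Dg_elem (fun t s => t \in cobd_set K s)).
  have Hb4 : forall s, s \in K -> upper_regular W s ->
      \sum_(t in K | s \in cobd_set K t) ref t = 0.
    move=> s sK ls; have := (R3 s sK ls).2.
    rewrite (linext_Dg_elem (fun t s => t \in bd_set K s)) // => e; apply: etrans e.
    apply: eq_bigl => t; rewrite !inE sK; by case: (t \in K).
  exact: (gen Hr cls C1 C2 (fun s sK us => (C3 s sK us).1) Ha4 R2
            (fun s sK ls => (R3 s sK ls).1) Hb4 (DD_cobd HK) (@HU2 _ _ _ HK Hms) p.+1 p).
Qed.
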